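(* Let $(S,d)$ be a complete metric space with a Hausdorff topology $\sigma$ compatible with $d$. Let $\phi:S\to(-\infty,+\infty]$, $D(\phi)\ne\emptyset$, satisfy: there exist $A,B>0$, $u_\star\in S$ with $\phi\ge-A-Bd^2(\cdot,u_\star)$; $\sup_{n,m}d(u_n,u_m)<+\infty$, $u_n\stackrel{\sigma}{\rightharpoonup}u$ $\Rightarrow$ $\liminf_n\phi(u_n)\ge\phi(u)$; and $\sup_{n,m}\{d(u_n,u_m),\phi(u_n)\}<+\infty$ $\Rightarrow$ some subsequence of $(u_n)$ $\sigma$-converges. Let $\mathcal{P}_\epsilon:S\to(-\infty,+\infty]$ ($\epsilon>0$) satisfy $\mathcal{P}_\epsilon(\cdot)\ge-\tilde A-\tilde Bd^2(\cdot,\tilde u_\star)$ for some $\tilde A,\tilde B>0$, $\tilde u_\star\in S$, and, for every $\epsilon_n\to0$: $\sup_{n,m}d(u_n,u_m)<+\infty$, $u_n\stackrel{\sigma}{\rightharpoonup}u$ $\Rightarrow$ $\sup_n|\mathcal{P}_{\epsilon_n}(u_n)|<+\infty$. Set $\phi_\epsilon=\phi+\epsilon\mathcal{P}_\epsilon$. If $\epsilon(\tau)>0$ with $\epsilon(\tau)/\tau\to0$ as $\tau\to0$, then for all $u,u_\tau\in S$ with $u_\tau\stackrel{\sigma}{\rightharpoonup}u$ and $\sup_\tau\{\phi_{\epsilon(\tau)}(u_\tau),d(u_\tau,u)\}<+\infty$, $$\liminf_{\tau\to0}\frac{\phi_{\epsilon(\tau)}(u_\tau)-\mathcal{Y}_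\tau\phi_{\epsilon(\tau)}(u_\tau)}{\tau}\ge\frac12|\partial^-\phi|^2(u).$$
   Context: $\sigma$ compatible with $d$: if $u_n\stackrel{\sigma}{\rightharpoonup}u$, $v_n\stackrel{\sigma}{\rightharpoonup}v$ then $\liminf_n d(u_n,v_n)\ge d(u,v)$; if $d(u_n,v_n)\to0$ and $u_n\stackrel{\sigma}{\rightharpoonup}u$ then $v_n\stackrel{\sigma}{\rightharpoonup}u$. Local slope $|\partial\phi|(v)=\limsup_{w\stackrel{d}{\to}v}\frac{(\phi(v)-\phi(w))^+}{d(v,w)}$; relaxed slope $|\partial^-\phi|(u)=\inf\{\liminf_n|\partial\phi|(u_n): u_n\stackrel{\sigma}{\rightharpoonup}u,\ \sup_n\{d(u_n,u),\phi(u_n)\}<+\infty\}$; $\mathcal{Y}_\tau f(u)=\inf_{v\in S}\{f(v)+\frac1{2\tau}d^2(v,u)\}$. *)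

(* Defs.v *)
From HB Require Import structures.
From mathcomp Require Import all_boot all_order all_algebra.
From mathcomp Require Import all_classical all_reals all_analysis.
Set Implicit Arguments. Unset Strict Implicit. Unset Printing Implicit Defensive.
Import Order.TTheory GRing.Theory Num.Theory.
Import numFieldNormedType.Exports.
Local Open Scope classical_set_scope.
Local Open Scope ring_scope.

Section Defs.
Context {R : realType} {S : topologicalType}.
(* S carries the (Hausdorff) topology sigma; d is a separate metric on S. *)
Variable d : S -> S -> R.

Definition is_metric : Prop :=
  (forall x y, 0 <= d x y) /\ (forall x y, d x y = 0 <-> x = y) /\
  (forall x y, d x y = d y x) /\ (forall x y z, d x z <= d x y + d y z).

Definition d_cauchy (u : nat -> S) : Prop :=
  forall e : R, 0 < e -> exists N, forall n m, (N <= n)%N -> (N <= m)%N -> d (u n) (u m) < e.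

Definition d_cvg (u : nat -> S) (x : S) : Prop :=
  forall e : R, 0 < e -> exists N, forall n, (N <= n)%N -> d (u n) x < e.

Definition d_complete : Prop :=
  forall u : nat -> S, d_cauchy u -> exists x, d_cvg u x.

Definition sig_cvg (u : nat -> S) (x : S) : Prop := u @ \oo --> x.

Definition compatible : Prop :=
  (forall (u v : nat -> S) (x y : S), sig_cvg u x -> sig_cvg v y ->
     ((d x y)%:E <= limn_einf (fun n => (d (u n) (v n))%:E))%E) /\
  (forall (u v : nat -> S) (x : S),
     (fun n => d (u n) (v n)) @ \oo --> (0 : R) -> sig_cvg u x -> sig_cvg v x).

Definition d_bounded_seq (u : nat -> S) : Prop :=
  exists M : R, forall n m, d (u n) (u m) <= M.

Local Open Scope ereal_scope.

(* Local slope |\partial phi|(v) = limsup_{w -> v} (phi v - phi w)^+ / d(v,w);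
   set to +oo outside D(phi), and to 0 at d-isolated points. *)
Definition local_slope (phi : S -> \bar R) (v : S) : \bar R :=
  if phi v == +oo then +oo else
  ereal_inf [set s | exists2 r : R, (0 < r)%R &
     s = ereal_sup ([set 0] `|` [set q | exists2 w : S, (0 < d v w < r)%R &
            q = maxe (phi v - phi w) 0 * ((d v w)^-1)%:E])].

Definition relaxed_slope (phi : S -> \bar R) (u : S) : \bar R :=
  ereal_inf [set s | exists un : nat -> S,
     [/\ sig_cvg un u,
         (exists M : R, forall n, (d (un n) u <= M)%R /\ phi (un n) <= M%:E) &
         s = limn_einf (fun n => local_slope phi (un n))]].

Definition yosida (tau : R) (f : S -> \bar R) (u : S) : \bar R :=
  ereal_inf [set f v + ((d v u ^+ 2) / (2 * tau))%:E | v in [set: S]].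

End Defs.

Local Open Scope ereal_scope.
Definition liminf_right0 {R : realType} (f : R -> \bar R) : \bar R :=
  ereal_sup [set s | exists2 delta : R, (0 < delta)%R &
     s = ereal_inf [set f t | t in [set t : R | (0 < t < delta)%R]]].

(* Main.v *)
Require Import Defs.
From HB Require Import structures.
From mathcomp Require Import all_boot all_order all_algebra.
From mathcomp Require Import all_classical all_reals all_analysis.
From mathcomp Require Import ring lra.
Import Order.TTheory GRing.Theory Num.Theory.
Import numFieldNormedType.Exports.
Local Open Scope classical_set_scope.
Local Open Scope ring_scope.

Section Aux.
Local Open Scope ereal_scope.
Lemma limn_einfE (R : realType) (u : (\bar R)^nat) :
  limn_einf u = ereal_sup (range (einfs u)).
Proof. by rewrite limn_einf_lim; apply/cvg_lim => //; exact: cvg_einfs_sup. Qed.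

Lemma lt_limn_einf (R : realType) (u : (\bar R)^nat) (x : \bar R) :
  x < limn_einf u -> exists N, forall n, (N <= n)%N -> x < u n.
Proof.
rewrite limn_einfE => /ereal_sup_gt [y [N _ <-]] xy.
exists N => n Nn; apply: (lt_le_trans xy).
rewrite /einfs; apply: ereal_inf_lbound; by exists n.
Qed.

Lemma limn_einf_le (R : realType) (u : (\bar R)^nat) (y : \bar R) N :
  (forall n, (N <= n)%N -> u n <= y) -> limn_einf u <= y.
Proof.
move=> H; rewrite limn_einfE; apply: ge_ereal_sup => _ [M _ <-].
rewrite /einfs; apply: ge_ereal_inf; exists (u (maxn N M)).
  by exists (maxn N M) => //; rewrite /= leq_maxr.
by apply: H; rewrite leq_maxl.
Qed.
End Aux.

Section Tele.
Variable R : realType.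
Lemma telescope_min (t q pv : R) (K : nat) (p Dd : nat -> R) :
  0 < t -> 0 < q -> q < 1 -> (0 < K)%N ->
  (forall k, (1 <= k < K)%N ->
     p k + Dd k ^+ 2 / (2 * (t * q ^+ k)) <= p k.+1 + Dd k.+1 ^+ 2 / (2 * (t * q ^+ k))) ->
  p K + Dd K ^+ 2 / (2 * (t * q ^+ K)) <= pv ->
  exists2 k, (1 <= k <= K)%N &
    (Dd k / (t * q ^+ k)) ^+ 2 * (t * (q - q ^+ K.+1) / 2) <= pv - (p 1%N + Dd 1%N ^+ 2 / (2 * t)).
Proof.
move=> t0 q0 q1 K0 Hstep Hlast.
pose tau k := t * q ^+ k.
have tau0 : forall k, 0 < tau k by move=> k; rewrite /tau mulr_gt0 // exprn_gt0.
pose a k := p k + Dd k ^+ 2 / (2 * tau k).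
pose bb k := if k == K.+1 then pv else p k + Dd k ^+ 2 / (2 * tau k.-1).
pose x k := (Dd k / tau k) ^+ 2.
pose c k := tau k * (1 - q) / 2.
have c0 : forall k, 0 < c k by move=> k; rewrite /c divr_gt0 // mulr_gt0 // subr_gt0.
have C1 : forall k, (1 <= k < K.+1)%N -> a k <= bb k.+1.
  move=> k /andP[k1 kK]; rewrite /bb eqSS /=.
  case: (ltngtP k K) => kK'.
  - by apply: Hstep; rewrite k1 kK'.
  - by move: kK; rewrite ltnS leqNgt kK'.
  - by rewrite kK'.
have C2 : forall k, (1 <= k < K.+1)%N -> a k - bb k = x k * c k.
  move=> k /andP[k1 kK]; rewrite /bb.
  have -> : (k == K.+1) = false by apply/negbTE; rewrite neq_ltn kK.
  rewrite /a /x /c.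
  case: k k1 kK => // k _ _.
  rewrite /= /tau !(exprS q).
  have qn : q ^+ k != 0 by rewrite expf_neq0 // gt_eqF.
  field.
  by rewrite !gt_eqF // ?mulr_gt0 ?exprn_gt0.
have Hsum : \sum_(1 <= k < K.+1) x k * c k <= pv - bb 1%N.
  have -> : pv - bb 1%N = bb K.+1 - bb 1%N by rewrite /bb eqxx.
  rewrite -telescope_sumr //; apply: ler_sum_nat => k hk.
  rewrite -C2 //; have := C1 k hk; lra.
have Sc : \sum_(1 <= k < K.+1) c k = t * (q - q ^+ K.+1) / 2.
  have -> : \sum_(1 <= k < K.+1) c k = \sum_(1 <= k < K.+1) (t / 2 * ((- q ^+ k.+1) - (- q ^+ k))).
    apply: eq_bigr => k _; rewrite /c /tau exprS; ring.
  rewrite -mulr_sumr telescope_sumr // expr1; ring.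
have bb1 : bb 1%N = p 1%N + Dd 1%N ^+ 2 / (2 * t) by rewrite /bb eqSS eq_sym eqn0Ngt K0 /= /tau expr0 mulr1.
rewrite -bb1 -Sc.
case: (pselect (exists2 k, (1 <= k <= K)%N & x k * (\sum_(1 <= k < K.+1) c k) <= pv - bb 1%N)) => // Hn.
exfalso.
have H : forall k, (1 <= k < K.+1)%N -> (pv - bb 1%N) * c k < x k * (\sum_(1 <= k < K.+1) c k) * c k.
  move=> k hk; rewrite ltr_pM2r //; rewrite ltNge; apply/negP => hle; apply: Hn; exists k => //.
set SC := \sum_(1 <= k < K.+1) c k in H.
have := @ltr_sum_nat _ 1%N K.+1 _ _ K0 H.
have E1 : \sum_(1 <= k < K.+1) (pv - bb 1%N) * c k = (pv - bb 1%N) * SC by rewrite mulr_sumr.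
have E2 : \sum_(1 <= k < K.+1) x k * SC * c k = SC * \sum_(1 <= k < K.+1) x k * c k.
  by rewrite mulr_sumr; apply: eq_bigr => k _; ring.
rewrite E1 E2.
have SC0 : 0 < SC.
  rewrite /SC Sc divr_gt0 // mulr_gt0 // subr_gt0.
  rewrite exprSr; have h : q ^+ K < 1 by rewrite exprn_ilt1 ?ltW // -lt0n.
  by rewrite gtr_pMl.
have : SC * \sum_(1 <= i < K.+1) x i * c i <= SC * (pv - bb 1%N) by rewrite ler_pM2l.
rewrite [SC * (pv - _)]mulrC; lra.
Qed.
End Tele.

Section Help.
Variable R : realType.
Lemma cvg_small2 (f : nat -> R) (C : R) : (forall n, 0 <= f n) ->
  (forall n, f n ^+ 2 <= C * n.+1%:R^-1) -> f @ \oo --> 0.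
Proof.
move=> f0 fC; apply/cvgrPdist_lt => e e0.
set C' := Num.max C 0.
have C'0 : 0 <= C' by rewrite le_max lexx orbT.
have e20 : 0 < e ^+ 2 by rewrite exprn_gt0.
have [N HN] : exists N : nat, C' / e ^+ 2 < N%:R.
  by exists (Num.Def.archi_bound (C' / e ^+ 2)); apply: archi_boundP; rewrite divr_ge0 // ltW.
exists N => // n /= Nn.
rewrite sub0r normrN ger0_norm //.
have h1 : f n ^+ 2 < e ^+ 2.
  apply: le_lt_trans (fC n) _.
  apply: (@le_lt_trans _ _ (C' * n.+1%:R^-1)); first by rewrite ler_pM2r ?invr_gt0 ?ltr0n // le_max lexx.
  rewrite -ltr_pdivlMr ?invr_gt0 ?ltr0n // invrK.
  move: HN; rewrite ltr_pdivrMr // => HN; apply: lt_le_trans HN _.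
  rewrite mulrC ler_pM2l // ler_nat; exact: leqW.
rewrite ltNge; apply/negP => h; move: h1; rewrite ltNge => /negP; apply.
by rewrite ler_pXn2r ?nnegrE ?(ltW e0) ?f0.
Qed.

Lemma cvg_seq_right (T : topologicalType) (g : R -> T) (tn : nat -> R) (l : T) :
  g @ at_right 0 --> l -> (forall n, 0 < tn n) -> tn @ \oo --> (0 : R) -> (g \o tn) @ \oo --> l.
Proof.
move=> Hg tp tc; apply: cvg_comp Hg.
move=> A HA.
have H : \forall n \near \oo, 0 < tn n -> A (tn n) := tc _ HA.
apply: (filterS _ H) => n; apply; exact: tp.
Qed.
End Help.

Section Final.
Variable R : realType.
Lemma Qpos (q : R) K : 0 < q -> q < 1 -> (0 < K)%N -> 0 < q - q ^+ K.+1.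
Proof.
move=> q0 q1 K0; rewrite subr_gt0 exprSr.
have h : q ^+ K < 1 by rewrite exprn_ilt1 ?ltW // -lt0n.
by rewrite gtr_pMl.
Qed.

Lemma final_step (s L : \bar R) : (0 <= s)%E ->
  (forall (q : R) (K : nat) (c : R), 0 < q -> q < 1 -> (0 < K)%N -> (L < c%:E)%E ->
      (s * s <= (2 * c / (q - q ^+ K.+1))%:E)%E) ->
  ((2^-1)%:E * (s * s) <= L)%E.
Proof.
move=> s0 H.
have hq : (0 : R) < 2^-1 by rewrite invr_gt0.
have hq1 : (2^-1 : R) < 1 by rewrite invf_lt1 ?ltr1n.
have Q2 : 0 < 2^-1 - 2^-1 ^+ 2 :> R := Qpos (2^-1) 1 hq hq1 isT.
have ss0 : (0 <= s * s)%E by apply: mule_ge0.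
case: L H => [l| |] H; last first.
- have h := H (2^-1) 1%N (-1) hq hq1 isT (ltNyr _).
  have : (2 * -1 / (2^-1 - 2^-1 ^+ 2) < 0 :> R).
    by rewrite mulrN1 mulNr oppr_lt0 divr_gt0.
  move=> h2; have := le_trans ss0 h; rewrite lee_fin => h3.
  by move: (le_lt_trans h3 h2); rewrite ltxx.
- by rewrite leey.
have [sg Es] : exists sg, s = sg%:E.
  have h : (s * s <= ((2 * (l + 1)) / (2^-1 - 2^-1 ^+ 2))%:E)%E.
    by apply: H => //; rewrite lte_fin ltrDl ltr01.
  clear ss0; move: h s0 H; case: s => [x| |] //; first by exists x.
rewrite Es lee_fin in s0; rewrite Es -!EFinM lee_fin.
apply/ler_addgt0Pr => e e0.
set c := l + e.
have Hc : forall q K, 0 < q -> q < 1 -> (0 < K)%N -> sg * sg * (q - q ^+ K.+1) <= 2 * c.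
  move=> q K q0 q1 K0; have := H q K c q0 q1 K0; rewrite lte_fin ltrDl => /(_ e0).
  by rewrite Es -EFinM lee_fin ler_pdivlMr ?Qpos.
have S0 : 0 <= sg * sg by rewrite mulr_ge0.
rewrite leNgt; apply/negP => hlt.
have hc2 : 2 * c < sg * sg by lra.
case: (ltrP c 0) => c0.
  have := Hc _ 1%N hq hq1 isT.
  have : 0 <= sg * sg * (2^-1 - 2^-1 ^+ 2) by rewrite mulr_ge0 // ltW.
  lra.
have sp : 0 < sg * sg by lra.
set eta := (sg * sg - 2 * c) / (2 * (sg * sg)).
have eta0 : 0 < eta by apply: divr_gt0; [lra | rewrite mulr_gt0].
have etaE : eta * (2 * (sg * sg)) = sg * sg - 2 * c by rewrite /eta divfK // gt_eqF // mulr_gt0.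
have eta1 : eta <= 2^-1.
  rewrite /eta ler_pdivrMr; last by rewrite mulr_gt0.
  have E : 2^-1 * (2 * (sg * sg)) = sg * sg by field.
  by rewrite E; lra.
clearbody eta.
set q := 1 - eta / 2.
have q0 : 0 < q by rewrite /q subr_gt0; lra.
have q1 : q < 1 by rewrite /q; lra.
have qa : `|q| < 1 by rewrite ger0_norm // ltW.
have := cvg_expr qa; move/cvgrPdist_lt => /(_ (eta / 2)).
rewrite divr_gt0 // => /(_ isT) [N _ HN].
have := HN N.+2 (leqW (leqnSn N)); rewrite /= sub0r normrN => hN.
have hK : q ^+ N.+2 < eta / 2 by apply: le_lt_trans (ler_norm _) hN.
have := Hc q N.+1 q0 q1 isT.
have hQ : 1 - eta <= q - q ^+ N.+2 by rewrite /q; lra.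
have : sg * sg * (1 - eta) <= sg * sg * (q - q ^+ N.+2) by rewrite ler_pM2l.
have E2 : sg * sg * (1 - eta) = sg * sg - eta * (sg * sg) by ring.
have E3 : eta * (sg * sg) = (sg * sg - 2 * c) / 2.
  by rewrite -etaE; field.
rewrite E2 E3; lra.
Qed.
End Final.

Section Prop8.
Variables (R : realType) (S : topologicalType) (d : S -> S -> R) (phi : S -> \bar R).
Hypothesis Hm : is_metric d.
Hypothesis Hphi : forall x, phi x != -oo%E.

Lemma d_ge0 x y : 0 <= d x y. Proof. by case: Hm. Qed.
Lemma d_sym x y : d x y = d y x. Proof. by case: Hm => _ [_ []]. Qed.
Lemma d_tri x y z : d x z <= d x y + d y z. Proof. by case: Hm => _ [_ [_]]. Qed.
Lemma d_xx x : d x x = 0. Proof. by case: Hm => _ [H _]; apply/H. Qed.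

Definition Phi v r z := (phi z + (d z v ^+ 2 / (2 * r))%:E)%E.
Definition minimizer v r w := forall z, (Phi v r w <= Phi v r z)%E.

Lemma min_real v r w pw z pz : 0 < r -> minimizer v r w -> phi w = pw%:E -> phi z = pz%:E ->
  2 * r * pw + d w v ^+ 2 <= 2 * r * pz + d z v ^+ 2.
Proof.
move=> r0 Hw Ew Ez; have := Hw z; rewrite /Phi Ew Ez -!EFinD lee_fin => H.
have r2 : 0 < 2 * r by rewrite mulr_gt0.
have := H; rewrite -(ler_pM2l r2) !mulrDr.
have E : forall x, 2 * r * (x / (2 * r)) = x.
  by move=> x; rewrite mulrC divfK // gt_eqF.
by rewrite !E.
Qed.

Lemma L_slope v r w : 0 < r -> minimizer v r w -> phi w != +oo%E ->
  (local_slope d phi w <= (d w v / r)%:E)%E.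
Proof.
move=> r0 Hw Hwf; rewrite /local_slope (negbTE Hwf).
have [pw Ew] : exists pw, phi w = pw%:E.
  by move: (Hphi w) Hwf; case: (phi w) => // x _ _; exists x.
apply/lee_addgt0Pr => eta eta0.
apply: ge_ereal_inf; eexists; first by exists (2 * r * eta) => //; rewrite !mulr_gt0.
apply: ge_ereal_sup => q [->|[z /andP[z0 zr] ->]].
  by rewrite -EFinD lee_fin addr_ge0 // ?divr_ge0 ?d_ge0 ?ltW.
rewrite Ew; case Ez: (phi z) => [pz| |].
- rewrite -EFinB -EFin_max -EFinM -EFinD lee_fin.
  rewrite ler_pdivrMr // ge_max; apply/andP; split; last first.
    by rewrite mulr_ge0 ?addr_ge0 ?divr_ge0 ?d_ge0 ?ltW.
  have H := @min_real v r w pw z pz r0 Hw Ew Ez.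
  have tz : d z v <= d w z + d w v by rewrite (le_trans (d_tri z w v)) // d_sym.
  set D := d w v in H tz *; set dz := d z v in H tz *; set de := d w z in z0 zr tz *.
  have D0 : 0 <= D by apply: d_ge0.
  have dz0 : 0 <= dz by apply: d_ge0.
  have X : D = D / r * r by rewrite divfK ?gt_eqF.
  set Y := D / r in X *.
  have H2 : 2 * r * (pw - pz) <= 2 * r * ((Y + eta) * de).
    rewrite mulrBr; have : dz ^+ 2 <= (de + D) ^+ 2 by rewrite ler_pXn2r ?nnegrE // addr_ge0 // ltW.
    move=> h.
    have h1 : de ^+ 2 <= 2 * r * eta * de.
      by rewrite expr2 ler_pM2r // ltW.
    have E : 2 * r * ((Y + eta) * de) = 2 * (Y * r) * de + 2 * r * eta * de by ring.
    have E2 : (de + D) ^+ 2 = de ^+ 2 + 2 * de * D + D ^+ 2 by ring.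
    rewrite E -X; rewrite E2 in h.
    have E3 : 2 * de * D = 2 * D * de by ring.
    rewrite E3 in h; lra.
  by move: H2; rewrite ler_pM2l ?mulr_gt0.
- by rewrite /= maxNye mul0e -EFinD lee_fin addr_ge0 // ?divr_ge0 ?d_ge0 ?ltW.
- by move: (Hphi z); rewrite Ez.
Qed.

Variables (A B : R) (ustar : S).
Hypotheses (A0 : 0 < A) (B0 : 0 < B).
Hypothesis Hlb : forall x, ((- A - B * d x ustar ^+ 2)%:E <= phi x)%E.
Hypothesis Hlsc : forall (un : nat -> S) (x : S), d_bounded_seq d un -> sig_cvg un x ->
      (phi x <= limn_einf (fun n => phi (un n)))%E.
Hypothesis Hcpt : forall un : nat -> S,
      (exists M : R, forall n m, d (un n) (un m) <= M /\ (phi (un n) <= M%:E)%E) ->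
      exists (h : nat -> nat) (x : S), {homo h : n m / (n < m)%N} /\ sig_cvg (un \o h) x.
Hypothesis Hc : compatible d.

Lemma sq_tri (a b c : R) : 0 <= a -> 0 <= b -> 0 <= c -> a <= b + c -> a ^+ 2 <= 2 * b ^+ 2 + 2 * c ^+ 2.
Proof.
move=> a0 b0 c0 abc.
have h1 : a ^+ 2 <= (b + c) ^+ 2 by rewrite ler_pXn2r // nnegrE addr_ge0.
have : 0 <= (b - c) ^+ 2 by apply: sqr_ge0.
have E1 : (b + c) ^+ 2 = b ^+ 2 + c ^+ 2 + 2 * (b * c) by ring.
have E2 : (b - c) ^+ 2 = b ^+ 2 + c ^+ 2 - 2 * (b * c) by ring.
rewrite E1 in h1; rewrite E2; lra.
Qed.

Lemma Phi_lb v r z : 0 < r -> r * (8 * B) <= 1 ->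
  ((- A - 2 * B * d v ustar ^+ 2 + 2 * B * d z v ^+ 2)%:E <= Phi v r z)%E.
Proof.
move=> r0 rB; rewrite /Phi; apply: le_trans (leeD2r _ (Hlb z)).
rewrite -EFinD lee_fin.
have h := sq_tri _ _ _ (d_ge0 z ustar) (d_ge0 z v) (d_ge0 v ustar) (d_tri z v ustar).
have h2 : 4 * B * d z v ^+ 2 <= d z v ^+ 2 / (2 * r).
  rewrite ler_pdivlMr ?mulr_gt0 //.
  have : 0 <= d z v ^+ 2 by apply: sqr_ge0.
  set X := d z v ^+ 2 => X0.
  have E : 4 * B * X * (2 * r) = X * (r * (8 * B)) by ring.
  by rewrite E ler_piMr.
have h3 : B * d z ustar ^+ 2 <= B * (2 * d z v ^+ 2 + 2 * d v ustar ^+ 2) by rewrite ler_pM2l.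
lra.
Qed.

Lemma sq_bound (x c : R) : 0 <= x -> x ^+ 2 <= c -> x <= 1 + c.
Proof.
move=> x0 xc; case: (lerP x 1) => x1.
  have : 0 <= c by apply: le_trans xc; apply: sqr_ge0.
  lra.
have : x <= x ^+ 2 by rewrite expr2 ler_peMr // ltW.
lra.
Qed.

Lemma homo_ge (h : nat -> nat) : {homo h : n m / (n < m)%N} -> forall n, (n <= h n)%N.
Proof.
move=> hh; elim=> // n IH; have := hh n n.+1 (ltnSn n).
by move=> H; apply: leq_ltn_trans IH H.
Qed.

Lemma sq_lem (de x eta : R) : 0 <= de -> 0 <= x -> 0 < eta -> de - eta < x ->
  de ^+ 2 - 2 * de * eta <= x ^+ 2.
Proof.
move=> d0 x0 e0 h; case: (lerP de eta) => h1.
  have : de * de <= de * eta by rewrite ler_wpM2l.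
  have : 0 <= x ^+ 2 by apply: sqr_ge0.
  have : 0 <= de * eta by rewrite mulr_ge0 // ltW.
  rewrite expr2; lra.
have h2 : (de - eta) ^+ 2 <= x ^+ 2 by rewrite ler_pXn2r ?nnegrE ?subr_ge0 ?(ltW h1) ?(ltW h).
have E : (de - eta) ^+ 2 = de ^+ 2 - 2 * de * eta + eta ^+ 2 by ring.
have : 0 <= eta ^+ 2 by apply: sqr_ge0.
rewrite E in h2; lra.
Qed.

Lemma fin_of (x : \bar R) : x != -oo%E -> x != +oo%E -> exists p : R, x = p%:E.
Proof. by case: x => // p _ _; exists p. Qed.

Lemma L_exist v r : 0 < r -> r * (8 * B) <= 1 -> phi v != +oo%E -> exists w, minimizer v r w.
Proof.
move=> r0 rB vf.
set L0 := - A - 2 * B * d v ustar ^+ 2.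
set m := ereal_inf (range (Phi v r)).
have mlb : (L0%:E <= m)%E.
  apply: le_ereal_inf_tmp => _ [z _ <-]; apply: le_trans (Phi_lb v r z r0 rB).
  by rewrite lee_fin lerDl mulr_ge0 ?sqr_ge0 // mulr_ge0 // ltW.
have mub : (m <= phi v)%E.
  apply: ereal_inf_lbound; exists v => //.
  by rewrite /Phi d_xx expr0n /= mul0r adde0.
have [mu Em] : exists mu, m = mu%:E.
  apply: fin_of.
    by apply/negP => /eqP E; move: mlb; rewrite E.
  by apply/negP => /eqP E; move: mub; rewrite E leye_eq (negbTE vf).
have seq : forall n : nat, exists z, (Phi v r z < (mu + n.+1%:R^-1)%:E)%E.
  move=> n; have : (m < (mu + n.+1%:R^-1)%:E)%E.
    by rewrite Em lte_fin ltrDl invr_gt0 ltr0n.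
  by move=> /ereal_inf_lt [_ [z _ <-] H]; exists z.
have [z Hz] := choice seq.
have Hzf : forall n, exists p, phi (z n) = p%:E.
  move=> n; apply: fin_of => //; apply/negP => /eqP E.
  by have := Hz n; rewrite /Phi E.
have [pz Hpz] := choice Hzf.
have key : forall n, pz n + d (z n) v ^+ 2 / (2 * r) < mu + n.+1%:R^-1.
  by move=> n; have := Hz n; rewrite /Phi Hpz -EFinD lte_fin.
have lbn : forall n, L0 + 2 * B * d (z n) v ^+ 2 <= pz n + d (z n) v ^+ 2 / (2 * r).
  by move=> n; have := Phi_lb v r (z n) r0 rB; rewrite /Phi Hpz -EFinD lee_fin.
have inv1 : forall n : nat, n.+1%:R^-1 <= 1 :> R.
  by move=> n; rewrite invf_le1 ?ltr0n // ler1n.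
set K1 := 1 + (mu + 1 - L0) / (2 * B).
have dK : forall n, d (z n) v <= K1.
  move=> n; apply: sq_bound; first exact: d_ge0.
  rewrite ler_pdivlMr ?mulr_gt0 //.
  have := key n; have := lbn n; have := inv1 n.
  have : 0 <= d (z n) v ^+ 2 / (2 * r) by rewrite divr_ge0 ?sqr_ge0 // mulr_ge0 // ltW.
  have E : d (z n) v ^+ 2 * (2 * B) = 2 * B * d (z n) v ^+ 2 by ring.
  rewrite E; clear -B0; move: (d (z n) v ^+ 2 / (2 * r)) (n.+1%:R^-1) (d (z n) v ^+ 2) => q i D2.
  lra.
have pzb : forall n, pz n <= mu + 1.
  move=> n; have := key n; have := inv1 n.
  have : 0 <= d (z n) v ^+ 2 / (2 * r) by rewrite divr_ge0 ?sqr_ge0 // mulr_ge0 // ltW.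
  move: (d (z n) v ^+ 2 / (2 * r)) (n.+1%:R^-1) => q i.
  lra.
have dzz : forall n k, d (z n) (z k) <= 2 * K1.
  move=> n k; apply: le_trans (d_tri (z n) v (z k)) _.
  rewrite (d_sym v (z k)); have := dK n; have := dK k; lra.
have [h [w [hh cw]]] : exists (h : nat -> nat) (x : S), {homo h : n m / (n < m)%N} /\ sig_cvg (z \o h) x.
  apply: Hcpt; exists (Num.max (2 * K1) (mu + 1)) => n k; split.
    by rewrite le_max dzz.
  by rewrite Hpz lee_fin le_max pzb orbT.
set zh := z \o h.
have bnd : d_bounded_seq d zh by exists (2 * K1) => n k; apply: dzz.
have lscw := Hlsc _ _ bnd cw.
have cdw : ((d w v)%:E <= limn_einf (fun n => (d (zh n) v)%:E))%E.
  by apply: (Hc.1 zh (fun _ => v) w v cw); apply: cvg_cst.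
have [pw Ew] : exists pw, phi w = pw%:E.
  apply: fin_of => //; apply/negP => /eqP E.
  have : (phi w <= (mu + 1)%:E)%E.
    apply: le_trans lscw _; apply: (@limn_einf_le _ _ _ 0) => n _.
    by rewrite /zh /= Hpz lee_fin pzb.
  by rewrite E.
set de := d w v in cdw *.
set c := (2 * r)^-1.
have c0 : 0 < c by rewrite invr_gt0 mulr_gt0.
have de0 : 0 <= de by apply: d_ge0.
have keye : forall eta, 0 < eta -> pw + de ^+ 2 * c <= mu + eta * (2 + 2 * de * c).
  move=> eta eta0.
  have [N1 H1] : exists N, forall n, (N <= n)%N -> ((pw - eta)%:E < phi (zh n))%E.
    apply: lt_limn_einf; apply: lt_le_trans lscw; rewrite Ew lte_fin; lra.
  have [N2 H2] : exists N, forall n, (N <= n)%N -> ((de - eta)%:E < (d (zh n) v)%:E)%E.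
    by apply: lt_limn_einf; apply: lt_le_trans cdw; rewrite lte_fin; lra.
  set N3 := Num.Def.archi_bound (eta^-1).
  have HN3 : eta^-1 < N3%:R by apply: archi_boundP; rewrite invr_ge0 ltW.
  set n := (N1 + N2 + N3)%N.
  have h1 := H1 n (leq_trans (leq_addr N2 N1) (leq_addr N3 _)).
  have h2 := H2 n (leq_trans (leq_addl N1 N2) (leq_addr N3 _)).
  rewrite /zh /= Hpz lte_fin in h1.
  rewrite /zh /= lte_fin in h2.
  have h3 := key (h n).
  have h4 : (h n).+1%:R^-1 < eta.
    rewrite invf_plt ?posrE ?ltr0n //; apply: lt_le_trans HN3 _.
    rewrite ler_nat; apply: (leq_trans _ (leqnSn _)).
    by apply: (leq_trans _ (homo_ge h hh n)); rewrite leq_addl.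
  have h5 := sq_lem _ _ _ de0 (d_ge0 _ _) eta0 h2.
  have h6 : (de ^+ 2 - 2 * de * eta) * c <= d (z (h n)) v ^+ 2 * c by rewrite ler_pM2r.
  have E1 : (de ^+ 2 - 2 * de * eta) * c = de ^+ 2 * c - 2 * (de * eta * c) by ring.
  have E2 : eta * (2 + 2 * de * c) = 2 * eta + 2 * (de * eta * c) by ring.
  rewrite E1 in h6; rewrite E2.
  move: h1 h3 h4 h6; rewrite -/c.
  move: (d (z (h n)) v ^+ 2 * c) (de * eta * c) (de ^+ 2 * c) ((h n).+1%:R^-1) => X Z Y i.
  lra.
exists w => y; apply: (@le_trans _ _ m); last by apply: ereal_inf_lbound; exists y.
rewrite /Phi Ew Em -EFinD lee_fin -/de -/c.
apply/ler_addgt0Pr => e e0.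
have k0 : 0 < 2 + 2 * de * c.
  have : 0 <= 2 * de * c by rewrite !mulr_ge0 // ltW.
  lra.
have := keye (e / (2 + 2 * de * c)) (divr_gt0 e0 k0).
by rewrite divfK ?gt_eqF.
Qed.

Lemma L_small v r w M D : 0 < r -> r * (8 * B) <= 1 -> minimizer v r w ->
  (phi v <= M%:E)%E -> d v ustar <= D ->
  d w v ^+ 2 <= 4 * r * (M + A + 2 * B * D ^+ 2) /\ (phi w <= M%:E)%E.
Proof.
move=> r0 rB Hw vM vD.
have PwM : (Phi v r w <= M%:E)%E.
  apply: le_trans (Hw v) _; by rewrite /Phi d_xx expr0n /= mul0r adde0.
have [pw Ew] : exists pw, phi w = pw%:E.
  apply: fin_of => //; apply/negP => /eqP E; by move: PwM; rewrite /Phi E.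
move: PwM; rewrite /Phi Ew -EFinD lee_fin => PwM.
split; last first.
  rewrite lee_fin; have : 0 <= d w v ^+ 2 / (2 * r) by rewrite divr_ge0 ?sqr_ge0 // mulr_ge0 // ltW.
  lra.
have lb := Hlb w; rewrite Ew lee_fin in lb.
have h := sq_tri _ _ _ (d_ge0 w ustar) (d_ge0 w v) (d_ge0 v ustar) (d_tri w v ustar).
have hD : d v ustar ^+ 2 <= D ^+ 2 by rewrite ler_pXn2r ?nnegrE ?d_ge0 // (le_trans (d_ge0 v ustar)).
have h3 : B * d w ustar ^+ 2 <= B * (2 * d w v ^+ 2 + 2 * d v ustar ^+ 2) by rewrite ler_pM2l.
have h4 : B * d v ustar ^+ 2 <= B * D ^+ 2 by rewrite ler_pM2l.
set q := d w v ^+ 2 in h h3 PwM *.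
have q0 : 0 <= q by apply: sqr_ge0.
set y := q / (2 * r) in PwM *.
have Eq : q = y * (2 * r) by rewrite /y divfK // gt_eqF // mulr_gt0.
have h2 : 4 * B * q <= y.
  rewrite /y ler_pdivlMr ?mulr_gt0 //.
  have E : 4 * B * q * (2 * r) = q * (r * (8 * B)) by ring.
  by rewrite E ler_piMr.
have E3 : B * (2 * q + 2 * d v ustar ^+ 2) = 2 * (B * q) + 2 * (B * d v ustar ^+ 2) by ring.
have E4 : 4 * B * q = 4 * (B * q) by ring.
rewrite E3 in h3; rewrite E4 in h2.
have hy : y <= 2 * (M + A + 2 * B * D ^+ 2) by lra.
rewrite Eq.
have E5 : 4 * r * (M + A + 2 * B * D ^+ 2) = (2 * (M + A + 2 * B * D ^+ 2)) * (2 * r) by ring.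
by rewrite E5 ler_pM2r // mulr_gt0.
Qed.

Lemma ls_ge0 w : (0 <= local_slope d phi w)%E.
Proof.
rewrite /local_slope; case: ifP => _; first by rewrite le0y.
apply: le_ereal_inf_tmp => _ [r r0 ->]; apply: ereal_sup_ubound; by left.
Qed.

Lemma rs_ge0 x : (0 <= relaxed_slope d phi x)%E.
Proof.
apply: le_ereal_inf_tmp => _ [un [_ _ ->]]; rewrite limn_einfE.
apply: (@le_trans _ _ (einfs (fun n => local_slope d phi (un n)) 0%N)).
  by apply: le_ereal_inf_tmp => _ [k _ <-]; apply: ls_ge0.
by apply: ereal_sup_ubound; exists 0%N.
Qed.

Variables (P : R -> S -> \bar R) (eps : R -> R).
Hypothesis HPb : forall (en : nat -> R) (un : nat -> S) (x : S),
      (forall n, 0 < en n) -> en @ \oo --> (0 : R) ->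
      d_bounded_seq d un -> sig_cvg un x ->
      exists M : R, forall n, (`| P (en n) (un n) | <= M%:E)%E.
Hypothesis Heps : forall t, 0 < t -> 0 < eps t.
Hypothesis Hepst : forall e, 0 < e -> exists2 delta, 0 < delta &
      forall t, 0 < t < delta -> eps t / t < e.

Definition phie e x := (phi x + e%:E * P e x)%E.

Lemma main_core (u : S) (ut : R -> S) (M0 : R) (q : R) (K : nat) (c : R) :
  ut @ at_right 0 --> u ->
  (forall t, 0 < t -> (phie (eps t) (ut t) <= M0%:E)%E /\ d (ut t) u <= M0) ->
  0 < q -> q < 1 -> (0 < K)%N ->
  (liminf_right0 (fun t => ((phie (eps t) (ut t) - yosida d t (phie (eps t)) (ut t)) * (t^-1)%:E)) < c%:E)%E ->
  (relaxed_slope d phi u * relaxed_slope d phi u <= (2 * c / (q - q ^+ K.+1))%:E)%E.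
Proof.
move=> Hut HM0 q0 q1 K0 HL.
pose F t := ((phie (eps t) (ut t) - yosida d t (phie (eps t)) (ut t)) * (t^-1)%:E)%E.
have B8 : 0 < 8 * B by rewrite mulr_gt0.
have Ht : forall n : nat, exists t, [/\ 0 < t, t < n.+1%:R^-1, eps t / t < n.+1%:R^-1,
     t * (8 * B) <= 1 & (F t < c%:E)%E].
  move=> n; have ninv : 0 < n.+1%:R^-1 :> R by rewrite invr_gt0 ltr0n.
  have [de de0 Hde] := Hepst _ ninv.
  set del := Num.min (Num.min (n.+1%:R^-1) de) (8 * B)^-1.
  have del0 : 0 < del by rewrite !lt_min de0 !invr_gt0 ltr0n B8.
  have : (ereal_inf [set F t | t in [set t | (0 < t < del)%R]] < c%:E)%E.
    by apply: (le_lt_trans _ HL); rewrite /liminf_right0; apply: (@ereal_sup_ubound _ _ (ereal_inf [set F t | t in [set t | (0 < t < del)%R]])); exists del.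
  move=> /ereal_inf_lt [_ [t /andP[t0 tdel] <-] Ft].
  move: tdel; rewrite !lt_min => /andP[/andP[t1 t2] t3].
  exists t; split => //; first by apply: Hde; rewrite t0.
  by apply: (@le_trans _ _ ((8 * B)^-1 * (8 * B))); [rewrite ler_pM2r // ltW | rewrite mulVf // gt_eqF].
have [tn Htn] := choice Ht.
have tn0 : forall n, 0 < tn n by move=> n; case: (Htn n).
have tn1 : forall n, tn n < n.+1%:R^-1 by move=> n; case: (Htn n).
have tne : forall n, eps (tn n) / tn n < n.+1%:R^-1 by move=> n; case: (Htn n).
have tnB : forall n, tn n * (8 * B) <= 1 by move=> n; case: (Htn n).
have tnF : forall n, (F (tn n) < c%:E)%E by move=> n; case: (Htn n).
have inv1 : forall n : nat, n.+1%:R^-1 <= 1 :> R by move=> n; rewrite invf_le1 ?ltr0n // ler1n.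
have inv0 : forall n : nat, 0 < n.+1%:R^-1 :> R by move=> n; rewrite invr_gt0 ltr0n.
have tnle1 : forall n, tn n <= 1 by move=> n; apply: le_trans (ltW (tn1 n)) (inv1 n).
pose en n := eps (tn n).
have en0 : forall n, 0 < en n by move=> n; apply: Heps.
have en_t : forall n, en n <= tn n * n.+1%:R^-1.
  move=> n; have := tne n; rewrite ltr_pdivrMr // => h; rewrite mulrC; exact: ltW.
have en1 : forall n, en n <= n.+1%:R^-1.
  move=> n; apply: le_trans (en_t n) _; apply: ler_piMl; [exact: ltW | exact: tnle1].
have enle1 : forall n, en n <= 1 by move=> n; apply: le_trans (en1 n) (inv1 n).
have encvg : en @ \oo --> (0 : R).
  apply: (@cvg_small2 R en 1) => n; first exact: ltW.
  rewrite mul1r; apply: le_trans (en1 n); rewrite expr2; apply: ler_piMl; [exact: ltW | exact: enle1].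
have tncvg : tn @ \oo --> (0 : R).
  apply: (@cvg_small2 R tn 1) => n; first exact: ltW.
  rewrite mul1r; apply: le_trans (ltW (tn1 n)); rewrite expr2; apply: ler_piMl; [exact: ltW | exact: tnle1].
pose vn n := ut (tn n).
have vcvg : sig_cvg vn u by apply: (@cvg_seq_right R S ut tn u Hut tn0 tncvg).
have HM0v : forall n, (phie (en n) (vn n) <= M0%:E)%E /\ d (vn n) u <= M0 := fun n => HM0 _ (tn0 n).
have M00 : 0 <= M0 by apply: le_trans (d_ge0 (vn 0%N) u) (HM0v 0%N).2.
have vbnd : d_bounded_seq d vn.
  exists (2 * M0) => n k; apply: le_trans (d_tri (vn n) u (vn k)) _; rewrite (d_sym u).
  have := (HM0v n).2; have := (HM0v k).2; lra.
have [M1 HM1] := HPb en vn u en0 encvg vbnd vcvg.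
have : forall n, exists p, P (en n) (vn n) = p%:E /\ `|p| <= M1.
  move=> n; have := HM1 n; case: (P (en n) (vn n)) => [p| |] //= h.
  by exists p; split => //; rewrite -lee_fin.
move/choice => [pP HpP].
have M10 : 0 <= M1 by apply: le_trans (normr_ge0 _) (HpP 0%N).2.
have : forall n, exists p, phi (vn n) = p%:E /\ p + en n * pP n <= M0.
  move=> n; have := (HM0v n).1; rewrite /phie (HpP n).1.
  case: (phi (vn n)) (Hphi (vn n)) => [p| |] //= _ h.
  by exists p; split => //; move: h; rewrite -EFinM -EFinD lee_fin.
move/choice => [pv Hpv].
have pvb : forall n, pv n <= M0 + M1.
  move=> n; have h1 := (Hpv n).2.
  have h2 : - (en n * pP n) <= M1.
    apply: le_trans (ler_norm _) _; rewrite normrN normrM (ger0_norm (ltW (en0 n))).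
    apply: le_trans (HpP n).2; apply: ler_piMl; [exact: normr_ge0 | exact: enle1].
  lra.
set D := M0 + d u ustar.
have dvD : forall n, d (vn n) ustar <= D.
  by move=> n; apply: le_trans (d_tri (vn n) u ustar) _; rewrite lerD2r (HM0v n).2.
set C := (M0 + M1) + A + 2 * B * D ^+ 2.
have qk1 : forall k, q ^+ k <= 1 by move=> k; rewrite exprn_ile1 ?ltW.
have tau0 : forall n k, 0 < tn n * q ^+ k by move=> n k; rewrite mulr_gt0 // exprn_gt0.
have tauB : forall n k, tn n * q ^+ k * (8 * B) <= 1.
  move=> n k; apply: le_trans (tnB n); rewrite ler_pM2r //; apply: ler_piMr; [exact: ltW (tn0 n) | exact: qk1].
have tau1 : forall n k, tn n * q ^+ k <= n.+1%:R^-1.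
  move=> n k; apply: le_trans (ltW (tn1 n)); apply: ler_piMr; [exact: ltW (tn0 n) | exact: qk1].
have vfin : forall n, phi (vn n) != +oo%E by move=> n; rewrite (Hpv n).1.
have HW : forall n, exists Wn : nat -> S, forall k, minimizer (vn n) (tn n * q ^+ k) (Wn k).
  move=> n; have H : forall k, exists w, minimizer (vn n) (tn n * q ^+ k) w.
    by move=> k; apply: L_exist; [exact: tau0 | exact: tauB | exact: vfin].
  by have [f Hf] := choice H; exists f.
have [W HW'] := choice HW.
have WS : forall n k, d (W n k) (vn n) ^+ 2 <= 4 * (tn n * q ^+ k) * C /\ (phi (W n k) <= (M0 + M1)%:E)%E.
  move=> n k; apply: L_small; [exact: tau0 | exact: tauB | exact: HW' | | exact: dvD].
  by rewrite (Hpv n).1 lee_fin.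
have C0 : 0 <= C.
  have h := le_trans (sqr_ge0 _) (WS 0%N 0%N).1.
  by move: h; rewrite -mulrA pmulr_rge0 // pmulr_rge0.
have WSd : forall n k, d (W n k) (vn n) ^+ 2 <= 4 * C * n.+1%:R^-1.
  move=> n k; apply: le_trans (WS n k).1 _.
  have E : 4 * (tn n * q ^+ k) * C = 4 * C * (tn n * q ^+ k) by ring.
  by rewrite E; apply: ler_wpM2l; [rewrite mulr_ge0 | exact: tau1].
have Wd1 : forall n k, d (W n k) (vn n) <= 1 + 4 * C.
  move=> n k; apply: sq_bound; first exact: d_ge0.
  apply: le_trans (WSd n k) _; apply: ler_piMr; [exact: mulr_ge0 | exact: inv1].
pose pW n k := fine (phi (W n k)).
have EW : forall n k, phi (W n k) = (pW n k)%:E.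
  move=> n k; rewrite /pW fineK // fin_numE Hphi /=.
  by apply/negP => /eqP E; have := (WS n k).2; rewrite E.
have Wseq : forall kk : nat -> nat, [/\ sig_cvg (fun n => W n (kk n)) u,
     d_bounded_seq d (fun n => W n (kk n)) & forall n, d (W n (kk n)) u <= 1 + 4 * C + M0].
  move=> kk.
  have hd : forall n, d (W n (kk n)) u <= 1 + 4 * C + M0.
    move=> n; apply: le_trans (d_tri _ (vn n) _) _.
    by have := Wd1 n (kk n); have := (HM0v n).2; lra.
  split => //.
  - apply: (Hc.2 vn (fun n => W n (kk n)) u) => //.
    apply: (@cvg_small2 R _ (4 * C)) => n; first exact: d_ge0.
    by rewrite d_sym; apply: WSd.
  - exists (2 * (1 + 4 * C + M0)) => n m; apply: le_trans (d_tri _ u _) _.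
    by rewrite (d_sym u); have := hd n; have := hd m; lra.
have [w1c w1b _] := Wseq (fun _ => 1%N).
have [M2 HM2] := HPb en (fun n => W n 1%N) u en0 encvg w1b w1c.
have : forall n, exists p, P (en n) (W n 1%N) = p%:E /\ `|p| <= M2.
  move=> n; have := HM2 n; case: (P (en n) (W n 1%N)) => [p| |] //= h.
  by exists p; split => //; rewrite -lee_fin.
move/choice => [pP1 HpP1].
pose Dd n k := d (W n k) (vn n).
have Htel : forall n, exists k, (1 <= k <= K)%N /\
    (Dd n k / (tn n * q ^+ k)) ^+ 2 * (tn n * (q - q ^+ K.+1) / 2) <=
    pv n - (pW n 1%N + Dd n 1%N ^+ 2 / (2 * tn n)).
  move=> n.
  have h1 : forall k, (1 <= k < K)%N ->
     pW n k + Dd n k ^+ 2 / (2 * (tn n * q ^+ k)) <= pW n k.+1 + Dd n k.+1 ^+ 2 / (2 * (tn n * q ^+ k)).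
    by move=> k _; have := HW' n k (W n k.+1); rewrite /Phi !EW -!EFinD lee_fin.
  have h2 : pW n K + Dd n K ^+ 2 / (2 * (tn n * q ^+ K)) <= pv n.
    by have := HW' n K (vn n); rewrite /Phi EW (Hpv n).1 d_xx expr0n /= mul0r -!EFinD lee_fin addr0.
  have [k hk1 hk2] := @telescope_min R (tn n) q (pv n) K (pW n) (Dd n) (tn0 n) q0 q1 K0 h1 h2.
  by exists k.
move/choice: Htel => [kk Hkk].
have Fb : forall n, pv n - (pW n 1%N + Dd n 1%N ^+ 2 / (2 * tn n)) <= tn n * c + en n * (M1 + M2).
  move=> n; have := tnF n; rewrite /F.
  set Y := yosida d (tn n) (phie (eps (tn n))) (ut (tn n)).
  have hY : (Y <= (pW n 1%N + en n * pP1 n + Dd n 1%N ^+ 2 / (2 * tn n))%:E)%E.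
    apply: ereal_inf_lbound; exists (W n 1%N) => //.
    by rewrite /phie EW (HpP1 n).1 -EFinM -!EFinD.
  have hphie : phie (eps (tn n)) (ut (tn n)) = (pv n + en n * pP n)%:E.
    by rewrite /phie -/(en n) -/(vn n) (Hpv n).1 (HpP n).1 -EFinM -EFinD.
  rewrite hphie.
  move: hY; case: Y => [y| |] //.
  - rewrite lee_fin => hY; rewrite -EFinB -EFinM lte_fin ltr_pdivrMr // => h.
    have h1 : en n * pP1 n <= en n * M2.
      by rewrite ler_pM2l //; apply: le_trans (ler_norm _) (HpP1 n).2.
    have h2 : - (en n * pP n) <= en n * M1.
      rewrite -mulrN ler_pM2l //; apply: le_trans (ler_norm _) _; rewrite normrN; exact: (HpP n).2.
    have E : en n * (M1 + M2) = en n * M1 + en n * M2 by ring.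
    rewrite E; rewrite mulrC in h; lra.
  - by rewrite /= mulyr gtr0_sg ?invr_gt0 // mul1e.
have Q0 : 0 < q - q ^+ K.+1 by apply: Qpos.
set Q := q - q ^+ K.+1 in Hkk Q0 *.
pose a n := Dd n (kk n) / (tn n * q ^+ kk n).
have a0 : forall n, 0 <= a n by move=> n; rewrite /a divr_ge0 ?d_ge0 // ltW.
have M120 : 0 <= M1 + M2.
  by have := le_trans (normr_ge0 _) (HpP1 0%N).2; move=> h; rewrite addr_ge0.
have xQ : forall n, a n ^+ 2 * Q <= 2 * c + 2 * (M1 + M2) * n.+1%:R^-1.
  move=> n; have h1 := (Hkk n).2; have h2 := Fb n.
  have h3 : en n * (M1 + M2) <= tn n * n.+1%:R^-1 * (M1 + M2) by rewrite ler_wpM2r.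
  have t2 : 0 < tn n / 2 by rewrite divr_gt0.
  rewrite -(ler_pM2l t2).
  have E1 : tn n / 2 * (a n ^+ 2 * Q) = (Dd n (kk n) / (tn n * q ^+ kk n)) ^+ 2 * (tn n * Q / 2).
    by rewrite /a; ring.
  have E2 : tn n / 2 * (2 * c + 2 * (M1 + M2) * n.+1%:R^-1) = tn n * c + tn n * n.+1%:R^-1 * (M1 + M2).
    by field.
  rewrite E1 E2.
  move: h1 h2 h3.
  move: ((Dd n (kk n) / (tn n * q ^+ kk n)) ^+ 2 * (tn n * Q / 2)) => X.
  move: (pv n - (pW n 1%N + Dd n 1%N ^+ 2 / (2 * tn n))) => Y.
  move: (en n * (M1 + M2)) (tn n * n.+1%:R^-1 * (M1 + M2)) (tn n * c) => Z1 Z2 Z3.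
  lra.
pose wn n := W n (kk n).
have slope_a : forall n, (local_slope d phi (wn n) <= (a n)%:E)%E.
  move=> n; apply: L_slope; [exact: tau0 | exact: HW' | by rewrite /wn EW].
have [wc wb wd] := Wseq kk.
have Hrs : (relaxed_slope d phi u <= limn_einf (fun n => local_slope d phi (wn n)))%E.
  apply: ereal_inf_lbound; exists wn; split => //.
  exists (Num.max (1 + 4 * C + M0) (M0 + M1)) => n; split.
    by rewrite le_max wd.
  apply: le_trans (WS n (kk n)).2 _; by rewrite lee_fin le_max lexx orbT.
apply/lee_addgt0Pr => e e0.
have Qe : 0 < e * Q by rewrite mulr_gt0.
set N := Num.Def.archi_bound (2 * (M1 + M2) / (e * Q)).
have HN : 2 * (M1 + M2) / (e * Q) < N%:R.
  by apply: archi_boundP; rewrite divr_ge0 ?mulr_ge0 // ltW.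
set G := 2 * c / Q + e.
have aG : forall n, (N <= n)%N -> a n ^+ 2 <= G.
  move=> n Nn; rewrite -(ler_pM2r Q0).
  have EG : G * Q = 2 * c + e * Q by rewrite /G; field; rewrite gt_eqF.
  rewrite EG; apply: le_trans (xQ n) _; rewrite lerD2l.
  move: HN; rewrite ltr_pdivrMr // => HN.
  have h : N%:R * (e * Q) <= n.+1%:R * (e * Q) by rewrite ler_pM2r // ler_nat; exact: leqW.
  rewrite -ler_pdivlMr ?invr_gt0 ?ltr0n // invrK.
  have E : n.+1%:R * (e * Q) = e * Q * n.+1%:R by ring.
  rewrite -E; apply: ltW; exact: lt_le_trans HN h.
have G0 : 0 <= G := le_trans (sqr_ge0 _) (aG N (leqnn N)).
have slopeG : forall n, (N <= n)%N -> (local_slope d phi (wn n) <= (Num.sqrt G)%:E)%E.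
  move=> n Nn; apply: le_trans (slope_a n) _; rewrite lee_fin.
  by rewrite -(ger0_norm (a0 n)) -sqrtr_sqr ler_wsqrtr // aG.
have sG : (relaxed_slope d phi u <= (Num.sqrt G)%:E)%E.
  exact: le_trans Hrs (@limn_einf_le R _ _ N slopeG).
have s0 := rs_ge0 u.
move: sG s0; case: (relaxed_slope d phi u) => [sg| |] //.
rewrite !lee_fin => sG s0.

have : sg * sg <= Num.sqrt G * Num.sqrt G by rewrite ler_pM.
have E : Num.sqrt G * Num.sqrt G = G by rewrite -expr2 sqr_sqrtr.
by rewrite E.
Qed.
End Prop8.
Theorem proposition8p1 (R : realType) (S : topologicalType) (d : S -> S -> R)
  (phi : S -> \bar R) (P : R -> S -> \bar R) (eps : R -> R) :
  (* (S,d) complete metric space, sigma Hausdorff and compatible with d *)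
  is_metric d -> d_complete d -> hausdorff_space S -> compatible d ->
  (* phi : S -> (-oo,+oo], D(phi) nonempty *)
  (forall x, phi x != -oo%E) -> (exists x, phi x != +oo%E) ->
  (* quadratic lower bound *)
  (exists (A B : R) (ustar : S), [/\ 0 < A, 0 < B &
      forall x, ((- A - B * d x ustar ^+ 2)%:E <= phi x)%E]) ->
  (* sigma lower semicontinuity on d-bounded sequences *)
  (forall (un : nat -> S) (x : S), d_bounded_seq d un -> sig_cvg un x ->
      (phi x <= limn_einf (fun n => phi (un n)))%E) ->
  (* sigma compactness of sublevels *)
  (forall un : nat -> S,
      (exists M : R, forall n m, d (un n) (un m) <= M /\ (phi (un n) <= M%:E)%E) ->
      exists (h : nat -> nat) (x : S), {homo h : n m / (n < m)%N} /\ sig_cvg (un \o h) x) ->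
  (* P_eps : S -> (-oo,+oo], quadratic lower bound *)
  (exists (A B : R) (ustar : S), [/\ 0 < A, 0 < B &
      forall e x, 0 < e -> ((- A - B * d x ustar ^+ 2)%:E <= P e x)%E]) ->
  (forall e x, 0 < e -> P e x != -oo%E) ->
  (* boundedness of P along sigma-convergent d-bounded sequences *)
  (forall (en : nat -> R) (un : nat -> S) (x : S),
      (forall n, 0 < en n) -> en @ \oo --> (0 : R) ->
      d_bounded_seq d un -> sig_cvg un x ->
      exists M : R, forall n, (`| P (en n) (un n) | <= M%:E)%E) ->
  (* eps(tau) > 0 and eps(tau)/tau -> 0 as tau -> 0+ *)
  (forall t, 0 < t -> 0 < eps t) ->
  (forall e, 0 < e -> exists2 delta, 0 < delta &
      forall t, 0 < t < delta -> eps t / t < e) ->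
  let phie := fun (e : R) (x : S) => (phi x + e%:E * P e x)%E in
  forall (u : S) (ut : R -> S),
    (ut @ at_right (0 : R) --> u) ->
    (exists M : R, forall t, 0 < t ->
        (phie (eps t) (ut t) <= M%:E)%E /\ d (ut t) u <= M) ->
    ((2^-1)%:E * (relaxed_slope d phi u * relaxed_slope d phi u)
      <= liminf_right0 (fun t =>
           ((phie (eps t) (ut t) - yosida d t (phie (eps t)) (ut t)) * (t^-1)%:E)))%E.
Proof.
move=> Hm Hcomp Hhaus Hc Hphi Hdom [A [B [ustar [A0 B0 Hlb]]]] Hlsc Hcpt HPlb HPinf HPb Heps Hepst phie u ut Hut [M0 HM0].
apply: final_step; first exact: rs_ge0.
move=> q K c q0 q1 K0 HL.
exact: (@main_core R S d phi Hm Hphi A B ustar B0 Hlb Hlsc Hcpt Hc P eps HPb Heps Hepst u ut M0 q K c Hut HM0 q0 q1 K0 HL).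
Qed.
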